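(* Let $\mathcal{K}$ be a compact second-countable Hausdorff space, let $\mathcal{C}$ be the set of continuous functions $\mathcal{K}\to\mathbb{R}$, and let $\mathcal{F}\subseteq\mathcal{C}$ be a generating system. For every $\mathcal{F}$-moment function sequence $w=(w_f:f\in\mathcal{F})$ there is a $\mathcal{K}$-graphon $W$ whose $\mathcal{F}$-moment representation is $w$, i.e. $\int_{\mathcal{K}}f\,dW(x,y)=w_f(x,y)$ for all $f\in\mathcal{F}$ and $x,y\in[0,1]$.
   Context: A generating system is a subset of $\mathcal{C}$ whose linear span is dense in $\mathcal{C}$ in supremum norm. An $\mathcal{F}$-moment sequence is a family $(a_f:f\in\mathcal{F})$ of reals of the form $a_f=\int_{\mathcal{K}}f\,d\mu$ for some Borel probability measure $\mu$ on $\mathcal{K}$. An $\mathcal{F}$-moment function sequence is a family $(w_f:f\in\mathcal{F})$ of bounded symmetric measurable functions $w_f:[0,1]^2\to\mathbb{R}$ such that $(w_f(x,y):f\in\mathcal{F})$ is an $\mathcal{F}$-moment sequence for all $x,y\in[0,1]$. Let $\mathcal{P}(\mathcal{K})$ be the space of Borel probability measures on $\mathcal{K}$ with the weak topology. A $\mathcal{K}$-graphon is a Borel measurable map $W:[0,1]^2\to\mathcal{P}(\mathcal{K})$ with $W(x,y)=W(y,x)$; its $\mathcal{F}$-moment representation is $(W_f:f\in\mathcal{F})$ with $W_f(x,y)=\int_{\mathcal{K}}f\,dW(x,y)$. *)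

(* Defs.v *)
From HB Require Import structures.
From mathcomp Require Import all_boot all_order all_algebra.
From mathcomp Require Import all_classical all_reals all_analysis.
Set Implicit Arguments. Unset Strict Implicit. Unset Printing Implicit Defensive.
Import Order.TTheory GRing.Theory Num.Theory.
Import numFieldNormedType.Exports.
Local Open Scope classical_set_scope.
Local Open Scope ring_scope.

Notation borel K := (g_sigma_algebraType (@open K)).

Definition PK (R : realType) (K : ptopologicalType) := probability (borel K) R.

Definition integ (R : realType) (K : ptopologicalType) (mu : PK R K)
  (f : K -> R) : \bar R := (\int[mu]_x (f x)%:E)%E.

Definition lin_span (R : realType) (K : Type) (F : set (K -> R)) : set (K -> R) :=
  [set h | exists (n : nat) (c : 'I_n -> R) (g : 'I_n -> K -> R),
     (forall i, F (g i)) /\ h = (fun x => \sum_(i < n) c i * g i x)].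

Definition generating_system (R : realType) (K : ptopologicalType)
  (F : set (K -> R)) :=
  (forall f, F f -> continuous f) /\
  forall g : K -> R, continuous g -> forall eps : R, 0 < eps ->
    exists2 h, lin_span F h & forall x, `|g x - h x| <= eps.

Definition moment_sequence (R : realType) (K : ptopologicalType)
  (F : set (K -> R)) (a : (K -> R) -> R) :=
  exists mu : PK R K, forall f, F f -> integ mu f = (a f)%:E.

Definition I01 (R : realType) : set R := [set x : R | 0 <= x <= 1].
Arguments I01 R : clear implicits.
Definition sq01 (R : realType) : set (R * R)%type := I01 R `*` I01 R.
Arguments sq01 R : clear implicits.

(* (w_f : f in F) is an F-moment function sequence; each w_f : [0,1]^2 -> R
   is represented as a function R -> R -> R of which only the values on
   [0,1]^2 matter. *)
Definition moment_function_sequence (R : realType) (K : ptopologicalType)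
  (F : set (K -> R)) (w : (K -> R) -> R -> R -> R) :=
  (forall f, F f ->
     (exists M : R, forall x y, I01 R x -> I01 R y -> `|w f x y| <= M) /\
     (forall x y, I01 R x -> I01 R y -> w f x y = w f y x) /\
     measurable_fun (sq01 R) (fun p : (R * R)%type => w f p.1 p.2)) /\
  forall x y, I01 R x -> I01 R y -> moment_sequence F (fun f => w f x y).

(* Open sets of P(K) for the weak topology, i.e. the coarsest topology making
   all maps mu |-> int g dmu (g continuous) continuous: U is open iff every
   mu in U has a basic neighbourhood
   {nu | |int g_i dnu - int g_i dmu| < eps for all i < n} contained in U. *)
Definition weak_open (R : realType) (K : ptopologicalType) (U : set (PK R K)) :=
  forall mu, U mu -> exists (n : nat) (g : 'I_n -> K -> R) (eps : R),
    (forall i, continuous (g i)) /\ 0 < eps /\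
    [set nu : PK R K | forall i,
       `|fine (integ nu (g i)) - fine (integ mu (g i))| < eps] `<=` U.

(* A K-graphon: a Borel measurable (for the Borel sigma-algebra of the weak
   topology, i.e. preimages of weakly open sets are Borel) symmetric map
   [0,1]^2 -> P(K). *)
Definition graphon (R : realType) (K : ptopologicalType)
  (W : R -> R -> PK R K) :=
  (forall x y, I01 R x -> I01 R y -> W x y = W y x) /\
  forall U : set (PK R K), weak_open U ->
    measurable (sq01 R `&` (fun p : (R * R)%type => W p.1 p.2) @^-1` U).

(* Main.v *)
Require Import Defs.
From HB Require Import structures.
From mathcomp Require Import all_boot all_order all_algebra.
From mathcomp Require Import all_classical all_reals all_analysis.
From mathcomp Require Import measurable_realfun ring lra.
From mathcomp Require Import archimedean.
Set Implicit Arguments. Unset Strict Implicit. Unset Printing Implicit Defensive.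
Import Order.TTheory GRing.Theory Num.Theory.
Import numFieldNormedType.Exports.
Local Open Scope classical_set_scope.
Local Open Scope ring_scope.

Section integ_facts.
Context (R : realType) (K : ptopologicalType).

Definition mb (g : K -> R) :=
  @measurable_fun _ _ (borel K) R setT g /\ exists M : R, forall x, `|g x| <= M.

Lemma cont_meas (g : K -> R) : continuous g ->
  @measurable_fun _ _ (borel K) R setT g.
Proof.
move=> cg; apply: (measurability _ (RGenOpens.measurableE R)).
move=> _ [_ [a [b ->]] <-]; rewrite setTI.
apply: sub_gen_smallest.
by apply: (proj1 (continuousP g) cg); exact: interval_open.
Qed.

Lemma cont_mb (Kc : compact [set: K]) (g : K -> R) : continuous g -> mb g.
Proof.
move=> cg; split; first exact: cont_meas.
have : compact (g @` setT).
  apply: continuous_compact => //; exact: continuous_subspaceT.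
move=> /compact_bounded [M [_ HM]].
exists (M + 1); move=> x; apply: (HM (M+1)); first by rewrite ltrDl.
by exists x.
Qed.

Lemma mb_cst (c : R) : mb (fun _ => c).
Proof. split; first exact: measurable_cst. by exists `|c|. Qed.

Lemma mbD f g : mb f -> mb g -> mb (fun x => f x + g x).
Proof.
move=> [mf [M HM]] [mg [N HN]]; split; first exact: measurable_funD.
by exists (M + N) => x; rewrite (le_trans (ler_normD _ _))// lerD.
Qed.

Lemma mbZ c f : mb f -> mb (fun x => c * f x).
Proof.
move=> [mf [M HM]]; split; first exact: measurable_funM.
by exists (`|c| * M) => x; rewrite normrM ler_wpM2l.
Qed.

Lemma mbB f g : mb f -> mb g -> mb (fun x => f x - g x).
Proof.
move=> hf hg; have -> : (fun x => f x - g x) = (fun x => f x + (-1) * g x).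
  by apply: funext => x; rewrite mulN1r.
exact: mbD hf (mbZ (-1) hg).
Qed.

Lemma PK_setT (mu : PK R K) : mu setT = 1%E.
Proof. exact: probability_setT. Qed.
Lemma PK_lty (mu : PK R K) : (mu setT < +oo)%E.
Proof. by rewrite PK_setT ltry. Qed.

Variable mu : PK R K.

Lemma mb_int g : mb g -> mu.-integrable setT (EFin \o g).
Proof.
move=> [mg [M HM]]; apply: measurable_bounded_integrable => //.
  exact: PK_lty.
exists M; split; first exact: num_real.
move=> y My x _; exact: le_trans (HM x) (ltW My).
Qed.

Definition Eg (g : K -> R) : R := fine (integ mu g).

Lemma integE g : mb g -> integ mu g = (Eg g)%:E.
Proof. move=> hg; rewrite /Eg fineK//; apply: integrable_fin_num => //. exact: mb_int. Qed.

Lemma EgD f g : mb f -> mb g -> Eg (fun x => f x + g x) = Eg f + Eg g.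
Proof.
move=> hf hg; apply: EFin_inj; rewrite -integE; last exact: mbD.
rewrite EFinD -!integE //.
by rewrite /integ -integralD_EFin //; exact: mb_int.
Qed.

Lemma EgZ c g : mb g -> Eg (fun x => c * g x) = c * Eg g.
Proof.
move=> hg; apply: EFin_inj; rewrite -integE; last exact: mbZ.
rewrite EFinM -integE // /integ -integralZl //; last exact: mb_int.
Qed.

Lemma Eg_cst c : Eg (fun _ => c) = c.
Proof.
apply: EFin_inj; rewrite -integE; last exact: mb_cst.
rewrite /integ integral_cst//; transitivity (c%:E * 1)%E; [congr (_ * _)%E; exact: PK_setT | exact: mule1].
Qed.

Lemma Eg_bound g e : mb g -> (forall x, `|g x| <= e) -> `|Eg g| <= e.
Proof.
move=> hg he; have mg := hg.1.
rewrite -lee_fin -abse_EFin -integE //.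
have e0 : 0 <= e by have x : K := point; exact: le_trans (he x).
apply: le_trans.
  apply: le_abse_integral => //; exact/measurable_EFinP.
apply: le_trans.
  apply: (integral_le_bound e%:E) => //; first exact/measurable_EFinP.
  by apply: aeW => x _; rewrite /= lee_fin.
rewrite -[leRHS]mule1; apply: lee_wpmul2l; first by rewrite lee_fin.
rewrite -[leRHS](PK_setT mu); exact: lexx.
Qed.

End integ_facts.

Section approx.
Context (R : realType) (K : Type) (X : eqType).

Definition fLg (ph : X -> K -> R) (q : X -> R) (L : seq X) : K -> R :=
  foldr (fun t f x => q t * ph t x + (1 - ph t x) * f x) (fun _ => 0) L.

Lemma approx_list (g : K -> R) (eps : R) (ph : X -> K -> R) (q : X -> R)
  (x : K) (L : seq X) :
  (forall t, t \in L -> 0 <= ph t x <= 1 /\ (ph t x != 0 -> `|g x - q t| <= eps)) ->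
  (exists2 t, t \in L & ph t x = 1) ->
  `|g x - fLg ph q L x| <= eps.
Proof.
elim: L => [|t L IH] HL [t0]; first by rewrite in_nil.
have [/andP[a0 a1] Ha] := HL t (mem_head _ _).
rewrite inE => Ht0 Ht0x /=.
set a := ph t x; set f' := fLg ph q L x.
have -> : g x - (q t * a + (1 - a) * f') = a * (g x - q t) + (1 - a) * (g x - f').
  by rewrite /a; ring.
have hA : `|a * (g x - q t)| <= a * eps.
  rewrite normrM ger0_norm //; have [->|an0] := eqVneq a 0; first by rewrite !mul0r.
  by rewrite ler_wpM2l // Ha.
have [a1'|an1] := eqVneq a 1.
  by rewrite a1' subrr mul0r addr0 mul1r; apply: Ha; rewrite -/a a1' oner_neq0.
have hB : `|(1 - a) * (g x - f')| <= (1 - a) * eps.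
  rewrite normrM (ger0_norm (x := 1 - a)) ?subr_ge0 //.
  apply: ler_wpM2l; first by rewrite subr_ge0.
  apply: IH; first by move=> t' Ht'; apply: HL; rewrite inE Ht' orbT.
  case/orP: Ht0 => [/eqP Ht0|Ht0]; last by exists t0.
  by move: an1; rewrite /a -Ht0 Ht0x eqxx.
apply: le_trans (ler_normD _ _) _.
have -> : eps = a * eps + (1 - a) * eps by ring.
exact: lerD.
Qed.
End approx.

Section sep.
Context (R : realType) (K : ptopologicalType).
Hypotheses (Kc : compact [set: K]) (Kh : hausdorff_space K)
  (K2 : @second_countable K).

Definition phi (e : nat -> set K) (ab : nat * nat) : K -> R :=
  fun x => 1 - Urysohn (closure (e ab.1)) (~` e ab.2) x.

Definition fL (e : nat -> set K) (L : seq ((nat * nat) * rat)) : K -> R :=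
  fLg (fun t => phi e t.1) (fun t => ratr t.2) L.

Lemma contD (f g : K -> R) : continuous f -> continuous g -> continuous (fun x => f x + g x).
Proof. move=> cf cg x; exact: (@continuousD _ _ _ f g x (cf x) (cg x)). Qed.
Lemma contM (f g : K -> R) : continuous f -> continuous g -> continuous (fun x => f x * g x).
Proof. move=> cf cg x; exact: (@continuousM _ _ f g x (cf x) (cg x)). Qed.
Lemma contC (c : R) : continuous (fun _ : K => c).
Proof. by move=> x; exact: cvg_cst. Qed.
Lemma contB (f g : K -> R) : continuous f -> continuous g -> continuous (fun x => f x - g x).
Proof. move=> cf cg x; exact: (@continuousD _ _ _ f (fun y => - g y) x (cf x) (@continuousN _ _ _ g x (cg x))). Qed.

Lemma fL_cont e L : continuous (fL e L).
Proof.
elim: L => [|t L IH] /=; first exact: contC.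
apply: contD; apply: contM => //; try exact: contC;
 rewrite /phi; repeat apply: contB; try exact: contC; exact: Urysohn_continuous.
Qed.

Lemma sepK : exists d : nat -> K -> R, (forall n, continuous (d n)) /\
  forall g, continuous g -> forall eps, 0 < eps ->
    exists n, forall x, `|g x - d n x| <= eps.
Proof.
have [B cB bB] := K2.
have [e He] := pcard_surjP cB.
have nK := compact_normal Kh Kc.
pose d n := match unpickle n with Some L => fL e L | None => fun _ => 0 end.
exists d; split.
  move=> n; rewrite /d; case: (unpickle n) => [L|]; first exact: fL_cont.
  exact: contC.
move=> g cg eps eps0.
have eps20 : 0 < eps / 2 by rewrite divr_gt0.
pose P x (t : (nat * nat) * rat) := [/\ e t.1.1 x /\ open (e t.1.1), closure (e t.1.1) `<=` e t.1.2,
  open (e t.1.2), (forall y, e t.1.2 y -> `|g y - g x| < eps / 2) &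
  `|g x - ratr t.2| < eps / 2].
have HP x : exists t, P x t.
  pose O := g @^-1` ball (g x) (eps / 2).
  have oO : open O by apply: (proj1 (continuousP g) cg); exact: ball_open.
  have nO : nbhs x O by apply: open_nbhs_nbhs; split => //; exact: ballxx.
  have [b [Bb bx] bO] := bB.2 x O nO.
  have ob : open b := bB.1 b Bb.
  have nb : nbhs x b by apply: open_nbhs_nbhs.
  have [V Vn Vcl] := compact_regular Kh Kc (@filterT _ _ _) nb.
  have [c [Bc cx] cV] := bB.2 x V Vn.
  have [a _ ea] := He c Bc.
  have [bb _ eb] := He b Bb.
  have : g x - eps / 2 < g x + eps / 2 by rewrite ltrBlDr -addrA ltrDl addr_gt0.
  move=> /rat_in_itvoo [q]; rewrite in_itv /= => /andP [q1 q2].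
  exists ((a, bb), q); split => /=; rewrite ?ea ?eb //.
  - by split => //; exact: bB.1.
  - by move=> y /(closureS cV) /Vcl.
  - by move=> y /bO; rewrite /O /= /ball /= distrC.
  - by rewrite ltr_norml; apply/andP; split; lra.
have [T HT] := choice HP.
have sepU x : uniform_separator (closure (e (T x).1.1)) (~` e (T x).1.2).
  have [_ Hcl Hop _ _] := HT x.
  apply: (normal_uniform_separator nK); first exact: closed_closure.
    exact: open_closedC.
  by apply/disjoints_subset; rewrite setCK.
have : finite_subset_cover [set: K] (fun x => e (T x).1.1) [set: K].
  move: Kc; rewrite compact_cover; apply.
    by move=> x _; have [[_ ?] _ _ _ _] := HT x.
  by move=> x _; exists x => //; have [[]] := HT x.
move=> [X _ HX].
pose L := [seq T x | x <- finmap.enum_fset X].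
exists (pickle L) => y; rewrite /d pickleK /fL.
apply: approx_list.
  move=> t /mapP [z zX ->]; have [_ Hcl Hop Hg Hq] := HT z.
  have := @Urysohn_range K R (closure (e (T z).1.1)) (~` e (T z).1.2) _ (imageT _ y).
  rewrite /phi /= => /andP [u0 u1]; rewrite !bnd_simp in u0 u1; split.
    by apply/andP; split; rewrite ?subr_ge0 // lerBlDr lerDl.
  move=> Hne.
  have eby : e (T z).1.2 y.
    apply: contrapT => nb; move: Hne; rewrite (_ : Urysohn _ _ y = 1) ?subrr ?eqxx //.
    by apply: (Urysohn_sub1 (sepU z)); exists y.
  have := Hg y eby.
  have -> : g y - ratr (T z).2 = (g y - g z) + (g z - ratr (T z).2) by ring.
  move=> h1; apply: le_trans (ler_normD _ _) _.
  by rewrite (splitr eps); apply: lerD; apply: ltW.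
have [z zX yz] := HX y I.
exists (T z); first by apply/mapP; exists z.
have [[ezy _] _ _ _ _] := HT z.
rewrite /phi (_ : Urysohn _ _ y = 0) ?subr0 //.
apply: (Urysohn_sub0 (sepU z)); exists y => //; exact: subset_closure.
Qed.

End sep.

Section lin.
Context (R : realType) (K : ptopologicalType) (F : set (K -> R)).
Hypothesis Kc : compact [set: K].
Hypothesis Fc : forall f, F f -> continuous f.

Definition hs (s : seq (R * (K -> R))) : K -> R :=
  fun x => \sum_(p <- s) p.1 * p.2 x.
Definition allF (s : seq (R * (K -> R))) : Prop :=
  foldr (fun p P => F p.2 /\ P) True s.

Lemma hs_cont s : allF s -> continuous (hs s).
Proof.
rewrite /hs; elim: s => [|p s IH] /=.
  move=> _; under eq_fun do rewrite big_nil; exact: contC.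
move=> [Fp /IH Hs]; under eq_fun do rewrite big_cons.
apply: contD => //; apply: contM; [exact: contC| exact: Fc].
Qed.

Lemma hs_mb s : allF s -> mb (hs s).
Proof. by move=> /hs_cont; exact: cont_mb. Qed.

Lemma Eg_hs (mu : PK R K) s : allF s ->
  Eg mu (hs s) = \sum_(p <- s) p.1 * Eg mu p.2.
Proof.
rewrite /hs; elim: s => [|p s IH] /=.
  by move=> _; under eq_fun do rewrite big_nil; rewrite Eg_cst big_nil.
move=> [Fp Hs]; under eq_fun do rewrite big_cons.
rewrite big_cons EgD; first by rewrite EgZ ?IH //; exact: cont_mb (Fc Fp).
  exact: mbZ (cont_mb Kc (Fc Fp)).
exact: hs_mb.
Qed.

Lemma lin_span_hs h : lin_span F h -> exists s, allF s /\ h = hs s.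
Proof.
move=> [n [c [g [Fg ->]]]].
exists [seq (c i, g i) | i <- enum 'I_n]; split.
  elim: (enum 'I_n) => //= i l IH; split => //.
apply: funext => x; rewrite /hs big_map big_enum /=.
by [].
Qed.

End lin.

Lemma small_inv (R : realType) (e : R) : 0 < e -> exists k : nat, (k.+1%:R)^-1 < e.
Proof.
move=> e0; exists (Num.truncn e^-1).
rewrite -[X in _ < X]invrK ltf_pV2 ?posrE ?invr_gt0 //.
exact: truncnS_gt.
Qed.

Lemma dense_span (R : realType) (K : ptopologicalType)
  (Kc : compact [set: K]) (Kh : hausdorff_space K) (K2 : @second_countable K)
  (F : set (K -> R)) (HF : generating_system F) :
  exists D : nat * nat -> seq (R * (K -> R)), (forall n, allF F (D n)) /\
    forall g, continuous g -> forall eps, 0 < eps ->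
      exists n, forall x, `|g x - hs (D n) x| <= eps.
Proof.
have [d [dc dd]] := sepK R Kc Kh K2.
have H nk : exists s, allF F s /\ forall x, `|d nk.1 x - hs s x| <= (nk.2.+1%:R)^-1.
  have e0 : 0 < (nk.2.+1%:R : R)^-1 by rewrite invr_gt0.
  have [h /lin_span_hs [s [Fs ->]] Hh] := HF.2 (d nk.1) (dc nk.1) _ e0.
  by exists s.
have [D HD] := choice H.
exists D; split; first by move=> n; exact: (HD n).1.
move=> g cg eps eps0.
have eps20 : 0 < eps / 2 by rewrite divr_gt0.
have [n Hn] := dd g cg _ eps20.
have [k Hk] := small_inv eps20.
exists (n, k) => x.
have -> : g x - hs (D (n, k)) x = (g x - d n x) + (d n x - hs (D (n, k)) x) by ring.
apply: le_trans (ler_normD _ _) _; rewrite (splitr eps); apply: lerD => //.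
exact: le_trans ((HD (n, k)).2 x) (ltW Hk).
Qed.

Lemma EgB (R : realType) (K : ptopologicalType) (mu : PK R K) f g :
  mb f -> mb g -> Eg mu (fun x => f x - g x) = Eg mu f - Eg mu g.
Proof.
move=> hf hg.
have -> : (fun x => f x - g x) = (fun x => f x + (-1) * g x).
  by apply: funext => x; rewrite mulN1r.
by rewrite EgD ?EgZ ?mulN1r //; exact: mbZ.
Qed.

Lemma preim_abs d (T : measurableType d) (R : realType) (f : T -> R) c :
  [set p | `|f p| < c] = f @^-1` `]-c, c[%classic.
Proof. by apply/seteqP; split => p /=; rewrite in_itv /= ltr_norml. Qed.

Lemma I01E (R : realType) : I01 R = `[0, 1]%classic.
Proof. by apply/seteqP; split => p /=; rewrite in_itv. Qed.

Lemma sq01_meas (R : realType) : measurable (sq01 R).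
Proof. by rewrite /sq01 I01E; apply: measurableX; exact: measurable_itv. Qed.

Unset Implicit Arguments.

Theorem lemma6 (R : realType) (K : ptopologicalType)
  (Kcpt : compact [set: K]) (Khaus : hausdorff_space K)
  (K2c : @second_countable K)
  (F : set (K -> R)) (HF : generating_system F)
  (w : (K -> R) -> R -> R -> R) (Hw : moment_function_sequence F w) :
  exists W : R -> R -> PK R K,
    graphon W /\
    forall f, F f -> forall x y, I01 R x -> I01 R y ->
      integ (W x y) f = (w f x y)%:E.
Proof.
move: Hw => [Hf Hmom].
have Fc := HF.1.
have I0 : I01 R 0 by rewrite /I01 /= lexx ler01.
have Hm (p : R * R) : exists mu : PK R K, I01 R p.1 -> I01 R p.2 ->
    forall f, F f -> integ mu f = (w f p.1 p.2)%:E.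
  have [mu0 _] := Hmom 0 0 I0 I0.
  case: (pselect (I01 R p.1 /\ I01 R p.2)) => [[h1 h2]|nh].
    by have [mu Hmu] := Hmom _ _ h1 h2; exists mu.
  by exists mu0 => h1 h2; exfalso; apply: nh.
have [m Hmm] := choice Hm.
pose W x y := m (Num.min x y, Num.max x y).
have HW x y : I01 R x -> I01 R y -> forall f, F f -> integ (W x y) f = (w f x y)%:E.
  move=> hx hy f Ff; rewrite /W; case: (leP x y) => xy.
    by rewrite (Hmm (x, y) hx hy f Ff).
  rewrite (Hmm (y, x) hy hx f Ff).
  by have [_ [Hs _]] := Hf f Ff; rewrite (Hs y x hy hx).
exists W; split; last by move=> f Ff x y hx hy; exact: HW.
split.
  by move=> x y _ _; rewrite /W minC maxC.
move=> U HU.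
have Kc := Kcpt.
have [D [DF Dd]] := dense_span Kcpt Khaus K2c HF.
pose G (s : seq (R * (K -> R))) (p : R * R) := \sum_(q <- s) q.1 * w q.2 p.1 p.2.
have G_meas s : allF F s -> measurable_fun (sq01 R) (G s).
  rewrite /G; elim: s => [|q s IH] /=.
    move=> _; under eq_fun do rewrite big_nil; exact: measurable_cst.
  move=> [Fq Hs]; under eq_fun do rewrite big_cons.
  apply: (measurable_funD (f := fun p => _) (g := fun p => _)); last exact: IH.
  apply: (measurable_funM (f := fun p => _) (g := fun p => _)); first exact: measurable_cst.
  by have [_ [_ ?]] := Hf _ Fq.
have EgW s p : allF F s -> sq01 R p -> Eg (W p.1 p.2) (hs s) = G s p.
  move=> Fs [hx hy]; rewrite (Eg_hs Kc Fc) // /G.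
  elim: s Fs => [|q s IH] /=; first by rewrite !big_nil.
  move=> [Fq Fs]; rewrite !big_cons IH //; congr (_ * _ + _).
  by rewrite /Eg HW.
pose eta k := ((k.+1)%:R : R)^-1.
pose V (t : seq (nat * nat) * nat) := [set nu : PK R K |
  forall i, i \in t.1 -> `|Eg nu (hs (D i))| < 2 * eta t.2].
pose A (t : seq (nat * nat) * nat) := foldr (fun i S => S `&`
  (sq01 R `&` [set p | `|G (D i) p| < 2 * eta t.2])) (sq01 R) t.1.
have A_meas t : measurable (A t).
  rewrite /A; elim: t.1 => [|i l IH] /=; first exact: sq01_meas.
  apply: measurableI => //; rewrite preim_abs; apply: G_meas => //.
  - exact: sq01_meas.
have A_spec t p : A t p <-> sq01 R p /\ forall i, i \in t.1 -> `|G (D i) p| < 2 * eta t.2.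
  rewrite /A; elim: t.1 => [|i l IH] /=.
    by split => [h|[]//]; split.
  split.
    move=> [/IH [h1 h2] [_ h3]]; split => // j; rewrite inE => /orP [/eqP ->|/h2] //.
  move=> [h1 h2]; split.
    by apply/IH; split => // j jl; apply: h2; rewrite inE jl orbT.
  by split => //; apply: h2; rewrite inE eqxx.
pose B n := match unpickle n with
  | Some t => if pselect (V t `<=` U) then A t else set0 | None => set0 end.
set S := (_ `&` _).
suff E : S = \bigcup_n B n.
  have HB : measurable (\bigcup_n B n).
    apply: bigcupT_measurable => n; rewrite /B; case: (unpickle n) => [t0|] //.
    by case: (pselect (V t0 `<=` U)) => h; [exact: A_meas | exact: measurable0].
  by rewrite E.
rewrite /S; apply/seteqP; split; last first.
  move=> p [n _]; rewrite /B; case: (unpickle n) => [t0|] //.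
  case: (pselect (V t0 `<=` U)) => // VU /A_spec [p01 Hp]; split => //.
  by apply: VU => i it; rewrite /= EgW //; exact: Hp.
move=> p [p01 /= WU].
have [nn [g [eps [gc [eps0 sub]]]]] := HU _ WU.
set mu := W p.1 p.2.
have eps30 : 0 < eps / 3 by rewrite divr_gt0.
have [k Hk] := small_inv eps30.
pose a i := Eg mu (g i).
have Hj i : exists j, forall x, `|(g i x - a i) - hs (D j) x| <= eta k.
  apply: Dd; last by rewrite invr_gt0.
  apply: contB; [exact: gc | exact: contC].
have [J HJ] := choice Hj.
pose t := ([seq J i | i <- enum 'I_nn], k).
have mbg i : mb (g i) := cont_mb Kcpt (gc i).
have mbh j : mb (hs (D j)) := hs_mb Kcpt Fc (DF j).
have key nu i : `|Eg nu (g i) - a i - Eg nu (hs (D (J i)))| <= eta k.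
  have mb1 : mb (fun x => g i x - a i) by exact: mbB (mbg i) (mb_cst _ (a i)).
  rewrite -(Eg_cst nu (a i)) -(EgB nu (mbg i) (mb_cst _ (a i))).
  rewrite -(EgB nu mb1 (mbh (J i))).
  exact: (Eg_bound nu (mbB mb1 (mbh (J i))) (HJ i)).
have Jt i : J i \in t.1 by apply: map_f; exact: mem_enum.
have VU : V t `<=` U.
  move=> nu Hnu; apply: sub => i /=.
  have h1 := Hnu _ (Jt i); have h2 := key nu i.
  rewrite -/(Eg nu (g i)) -/(Eg mu (g i)) -/(a i).
  have -> : Eg nu (g i) - a i = (Eg nu (g i) - a i - Eg nu (hs (D (J i)))) + Eg nu (hs (D (J i))) by ring.
  apply: le_lt_trans (ler_normD _ _) _.
  have -> : eps = 3 * (eps / 3) by field.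
  have : eta k + 2 * eta k < 3 * (eps / 3).
    by rewrite (_ : eta k + 2 * eta k = 3 * eta k); [rewrite ltr_pM2l | ring].
  apply: le_lt_trans; apply: lerD => //; exact: ltW.
exists (pickle t) => //; rewrite /B pickleK.
destruct (pselect (V t `<=` U)) as [vu|nVU]; last by exfalso; apply: nVU.
apply/A_spec; split => // j /mapP [i _ ->].
rewrite -EgW //; have := key mu i; rewrite /a subrr sub0r normrN => h.
apply: le_lt_trans h _; rewrite /=.
have e0 : 0 < eta k by rewrite invr_gt0.
lra.
Qed.
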